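(* Let $N_T,N_R\ge 1$ be integers, $N=N_TN_R$, $\mathcal{R}>0$, $\beta>0$, and define $\xi=[2\pi(2^{2\mathcal{R}}-1)]^{-1/2}$, $\tau=2^{\mathcal{R}}-1$, $\varphi_H=\tau+\frac{1}{2\xi\sqrt\beta}$, $\varphi_L=\tau-\frac{1}{2\xi\sqrt\beta}$. For $\bar\gamma_k>0$ let $$F_{\mathrm{MRC}}(\gamma)=\Big\{1-e^{-\gamma/\bar\gamma_k}\sum_{n=0}^{N_R-1}\frac{1}{n!}\Big(\frac{\gamma}{\bar\gamma_k}\Big)^n\Big\}^{N_T},\qquad F_{\mathrm{SC}}(\gamma)=\{1-e^{-\gamma/\bar\gamma_k}\}^{N},$$ and $\bar\varepsilon_k^{\mathrm{TAS/MRC}}=\xi\sqrt\beta\int_{\varphi_L}^{\varphi_H}F_{\mathrm{MRC}}(\gamma)d\gamma$, $\bar\varepsilon_k^{\mathrm{TAS/SC}}=\xi\sqrt\beta\int_{\varphi_L}^{\varphi_H}F_{\mathrm{SC}}(\gamma)d\gamma$. Define $$\tilde\varepsilon_k^{\infty\,\mathrm{TAS/MRC}}=\frac{\xi\sqrt\beta\,[\varphi_H^{N+1}-\varphi_L^{N+1}]}{(N_R!)^{N_T}\,\bar\gamma_k^{N}\,(N+1)},\qquad \tilde\varepsilon_k^{\infty\,\mathrm{TAS/SC}}=\frac{\xi\sqrt\beta\,[\varphi_H^{N+1}-\varphi_L^{N+1}]}{\bar\gamma_k^{N}\,(N+1)}.$$ Then, as $\bar\gamma_k\to\infty$, $\bar\varepsilon_k^{\mathrm{TAS/MRC}}\sim\tilde\varepsilon_k^{\infty\,\mathrm{TAS/MRC}}$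 and $\bar\varepsilon_k^{\mathrm{TAS/SC}}\sim\tilde\varepsilon_k^{\infty\,\mathrm{TAS/SC}}$ (i.e., the ratios tend to $1$).
   Context: $\bar\varepsilon_k^{\mathcal X}$ is the paper's approximation of the average per-hop block error rate in the finite-blocklength regime for transmit antenna selection with maximum ratio combining (MRC) or selection combining (SC) over Rayleigh fading with average per-link SNR $\bar\gamma_k$; $\tilde\varepsilon_k^{\infty\,\mathcal X}$ is the asymptotic per-hop BLER. *)

(* Defs.v *)
From Stdlib Require Import Reals.
From Coquelicot Require Import Coquelicot.
Open Scope R_scope.

(* Parameters: Rt = target rate \mathcal{R}, beta = blocklength. *)
Definition xi (Rt : R) : R := / sqrt (2 * PI * (Rpower 2 (2 * Rt) - 1)).
Definition tau (Rt : R) : R := Rpower 2 Rt - 1.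
Definition phiH (Rt beta : R) : R := tau Rt + / (2 * xi Rt * sqrt beta).
Definition phiL (Rt beta : R) : R := tau Rt - / (2 * xi Rt * sqrt beta).

Definition F_MRC (NT NR : nat) (gbar g : R) : R :=
  (1 - exp (- (g / gbar)) *
       sum_f_R0 (fun n => / INR (Factorial.fact n) * (g / gbar) ^ n) (NR - 1)) ^ NT.

Definition F_SC (NT NR : nat) (gbar g : R) : R :=
  (1 - exp (- (g / gbar))) ^ (NT * NR).

Definition eps_MRC (NT NR : nat) (Rt beta gbar : R) : R :=
  xi Rt * sqrt beta * RInt (F_MRC NT NR gbar) (phiL Rt beta) (phiH Rt beta).

Definition eps_SC (NT NR : nat) (Rt beta gbar : R) : R :=
  xi Rt * sqrt beta * RInt (F_SC NT NR gbar) (phiL Rt beta) (phiH Rt beta).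

Definition eps_inf_MRC (NT NR : nat) (Rt beta gbar : R) : R :=
  let N := (NT * NR)%nat in
  xi Rt * sqrt beta * (phiH Rt beta ^ (N + 1) - phiL Rt beta ^ (N + 1)) /
  (INR (Factorial.fact NR) ^ NT * gbar ^ N * INR (N + 1)).

Definition eps_inf_SC (NT NR : nat) (Rt beta gbar : R) : R :=
  let N := (NT * NR)%nat in
  xi Rt * sqrt beta * (phiH Rt beta ^ (N + 1) - phiL Rt beta ^ (N + 1)) /
  (gbar ^ N * INR (N + 1)).

(* Main.v *)
Require Import Defs.
From Stdlib Require Import Reals Lra Lia.
From Coquelicot Require Import Coquelicot.
Open Scope R_scope.

Definition ec (n : nat) : R := / INR (Factorial.fact n).

Lemma radius_inf (m : nat) : CV_radius (PS_decr_n ec m) = p_infty.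
Proof.
  apply CV_radius_infinite_DAlembert.
  - intros n. unfold PS_decr_n, ec. apply Rinv_neq_0_compat, INR_fact_neq_0.
  - apply is_lim_seq_ext with (fun n => / INR (S (m + n))).
    + intros n. unfold PS_decr_n, ec. rewrite Nat.add_succ_r. rewrite fact_simpl.
      rewrite mult_INR. pose proof (INR_fact_lt_0 (m+n)). pose proof (lt_0_INR (S (m+n)) ltac:(lia)).
      match goal with |- _ = Rabs ?e => replace e with (/ INR (S (m+n))) by (field; lra) end.
      rewrite Rabs_pos_eq; [reflexivity| apply Rlt_le, Rinv_0_lt_compat; lra].
    + replace (Finite 0) with (Rbar_inv p_infty) by reflexivity.
      apply is_lim_seq_inv; [|discriminate].
      apply is_lim_seq_ext with (fun n => INR (n + S m)); [intros n; f_equal; lia|].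
      apply (proj1 (is_lim_seq_incr_n INR (S m) p_infty)), is_lim_seq_INR.
Qed.

Lemma radius_ec : CV_radius ec = p_infty.
Proof. exact (radius_inf 0). Qed.

Definition q (m : nat) (x : R) : R := PSeries (PS_decr_n ec m) x.

Lemma tail_id (m : nat) (x : R) : (1 <= m)%nat ->
  1 - exp (- x) * sum_f_R0 (fun n => / INR (Factorial.fact n) * x ^ n) (m - 1)
  = exp (- x) * (x ^ m * q m x).
Proof.
  intros Hm.
  assert (Hex : ex_pseries ec x).
  { apply CV_radius_inside. rewrite radius_ec. exact I. }
  pose proof (PSeries_decr_n ec (m - 1) x Hex) as E.
  replace (S (m - 1)) with m in E by lia.
  rewrite <- exp_Reals in E. unfold ec in E.
  unfold q, ec.
  replace 1 with (exp (- x) * exp x) at 1.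
  - rewrite E. ring.
  - rewrite <- exp_plus, Rplus_opp_l, exp_0. reflexivity.
Qed.

Definition h (m k : nat) (x : R) : R := (exp (- x) * q m x) ^ k.

Lemma q_cont (m : nat) (x : R) : continuity_pt (q m) x.
Proof. apply PSeries_continuity. rewrite radius_inf. exact I. Qed.

Lemma h_cont (m k : nat) (x : R) : continuity_pt (h m k) x.
Proof.
  unfold h.
  apply (continuity_pt_comp (fun y => exp (- y) * q m y) (fun z => z ^ k)).
  - apply continuity_pt_mult.
    + apply (continuity_pt_comp Ropp exp). apply continuity_pt_opp, continuity_pt_id.
      apply derivable_continuous_pt, derivable_pt_exp.
    + apply q_cont.
  - apply derivable_continuous_pt, derivable_pt_pow.
Qed.

Lemma h0 (m k : nat) : h m k 0 = (/ INR (Factorial.fact m)) ^ k.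
Proof.
  unfold h, q. rewrite PSeries_0. unfold PS_decr_n, ec. rewrite Ropp_0, exp_0, Nat.add_0_r. f_equal; ring.
Qed.

Lemma poly_int (N : nat) (a b : R) :
  is_RInt (fun t => t ^ N) a b ((b ^ (N + 1) - a ^ (N + 1)) / INR (N + 1)).
Proof.
  assert (HN : INR (N + 1) <> 0) by (apply not_0_INR; lia).
  apply is_RInt_ext with (fun t => t ^ N); [reflexivity|].
  replace ((b ^ (N + 1) - a ^ (N + 1)) / INR (N + 1)) with
    (minus (b ^ (N + 1) / INR (N + 1)) (a ^ (N + 1) / INR (N + 1)))
    by (unfold minus, plus, opp; simpl; field; exact HN).
  apply (is_RInt_derive (fun t => t ^ (N + 1) / INR (N + 1))).
  - intros x _. auto_derive; [try exact HN; try exact I|].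
    replace (N + 1)%nat with (S N) by lia. simpl pred. field.
    replace (S N) with (N + 1)%nat by lia. exact HN.
  - intros x _. apply continuity_pt_filterlim.
    apply derivable_continuous_pt, derivable_pt_pow.
Qed.

Lemma main_lim (hh : R -> R) (Hc : forall x, continuity_pt hh x) (N : nat) (a b : R) :
  a < b ->
  is_lim (fun g => g ^ N * RInt (fun t => (t / g) ^ N * hh (t / g)) a b) p_infty
    (hh 0 * ((b ^ (N + 1) - a ^ (N + 1)) / INR (N + 1))).
Proof.
  intros Hab.
  apply is_lim_spec. intros eps. simpl.
  set (c := hh 0).
  set (B := Rabs a + Rabs b + 1).
  assert (HB : 0 < B) by (unfold B; pose proof (Rabs_pos a); pose proof (Rabs_pos b); lra).
  assert (HBN : 0 < B ^ N) by (apply pow_lt; lra).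
  set (K := B ^ N * (b - a) + 1).
  assert (HK : 0 < K) by (unfold K; nra).
  assert (He' : 0 < eps / K) by (apply Rdiv_lt_0_compat; [apply cond_pos|lra]).
  pose proof (Hc 0) as H0.
  unfold continuity_pt, continue_in, limit1_in, limit_in in H0. simpl in H0.
  destruct (H0 (eps / K) He') as [del [Hdel Hd]].
  exists (Rmax 1 (B / del)). intros g Hg.
  assert (Hg1 : 1 < g) by (eapply Rle_lt_trans; [apply Rmax_l|exact Hg]).
  assert (Hg2 : B / del < g) by (eapply Rle_lt_trans; [apply Rmax_r|exact Hg]).
  assert (Hgd : B < del * g).
  { apply (Rmult_lt_compat_r del) in Hg2; [|exact Hdel].
    unfold Rdiv in Hg2. rewrite Rmult_assoc, Rinv_l, Rmult_1_r in Hg2; lra. }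
  assert (HgN : 0 < g ^ N) by (apply pow_lt; lra).
  set (G := fun t => t ^ N * hh (t / g)).
  assert (HGc : forall z, continuous G z).
  { intros z. apply continuity_pt_filterlim. unfold G.
    apply continuity_pt_mult.
    - apply derivable_continuous_pt, derivable_pt_pow.
    - apply (continuity_pt_comp (fun t => t / g) hh); [|apply Hc].
      unfold Rdiv. apply continuity_pt_mult; [apply continuity_pt_id|apply continuity_pt_const].
      intros u v; reflexivity. }
  assert (HGi : ex_RInt G a b) by (apply (@ex_RInt_continuous R_CompleteNormedModule); intros; apply HGc).
  assert (E1 : g ^ N * RInt (fun t => (t / g) ^ N * hh (t / g)) a b = RInt G a b).
  { pose proof (is_RInt_scal G a b (/ g ^ N) _ (RInt_correct G a b HGi)) as HI.
    apply (is_RInt_ext _ (fun t => (t / g) ^ N * hh (t / g))) in HI.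
    - rewrite (is_RInt_unique _ _ _ _ HI). unfold scal; simpl. unfold mult; simpl. field. lra.
    - intros t _. unfold G, scal; simpl. unfold mult; simpl. unfold Rdiv. rewrite Rpow_mult_distr, pow_inv. field. lra. }
  rewrite E1.
  assert (HP := poly_int N a b).
  assert (HP2 := is_RInt_scal _ _ _ c _ HP).
  assert (E2 : c * ((b ^ (N + 1) - a ^ (N + 1)) / INR (N + 1)) = RInt (fun t => c * t ^ N) a b).
  { symmetry. apply is_RInt_unique. exact HP2. }
  rewrite E2.
  assert (HPi : ex_RInt (fun t => c * t ^ N) a b) by (eexists; exact HP2).
  assert (E3 : RInt G a b - RInt (fun t => c * t ^ N) a b = RInt (fun t => G t - c * t ^ N) a b).
  { symmetry. apply (RInt_minus G (fun t => c * t ^ N) a b HGi HPi). }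
  rewrite E3.
  eapply Rle_lt_trans.
  - apply (abs_RInt_le_const _ a b (B ^ N * (eps / K))); [lra| |].
    + apply (ex_RInt_minus G (fun t => c * t ^ N) a b HGi HPi).
    + intros t Ht.
      assert (Htb : Rabs t <= B).
      { unfold B. destruct (Rle_dec 0 t).
        - rewrite Rabs_pos_eq by lra. pose proof (Rle_abs b). pose proof (Rabs_pos a). lra.
        - rewrite Rabs_left by lra. pose proof (Rabs_pos b).
          pose proof (Rabs_Ropp a). pose proof (Rle_abs (- a)). lra. }
      replace (G t - c * t ^ N) with (t ^ N * (hh (t / g) - c)) by (unfold G; ring).
      rewrite Rabs_mult, <- RPow_abs.
      apply Rmult_le_compat; [apply pow_le, Rabs_pos|apply Rabs_pos| |].
      * apply pow_incr. split; [apply Rabs_pos|exact Htb].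
      * apply Rlt_le. destruct (Req_dec (t / g) 0) as [Ht0|Ht0].
        { rewrite Ht0. unfold c. rewrite Rminus_diag, Rabs_R0. exact He'. }
        apply Hd. split.
        -- unfold D_x, no_cond. split; [exact I|]. intros Hc0. apply Ht0. symmetry; exact Hc0.
        -- unfold Rdist. rewrite Rminus_0_r. unfold Rdiv. rewrite Rabs_mult, Rabs_inv, (Rabs_pos_eq g) by lra.
           apply (Rmult_lt_reg_r g); [lra|]. rewrite Rmult_assoc, Rinv_l, Rmult_1_r by lra. lra.
  - unfold K in *. 
    assert (Hpos : 0 < eps) by apply cond_pos.
    replace ((b - a) * (B ^ N * (eps / (B ^ N * (b - a) + 1)))) with
      (eps * ((B ^ N * (b - a)) / (B ^ N * (b - a) + 1))) by (field; lra).
    assert ((B ^ N * (b - a)) / (B ^ N * (b - a) + 1) < 1).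
    { apply (Rmult_lt_reg_r (B ^ N * (b - a) + 1)); [lra|].
      unfold Rdiv. rewrite Rmult_assoc, Rinv_l by lra. lra. }
    nra.
Qed.

Lemma pow_lt_S (x y : R) (n : nat) : 0 <= x < y -> x ^ S n < y ^ S n.
Proof.
  intros [Hx Hxy]. induction n.
  - simpl. lra.
  - change (x * x ^ S n < y * y ^ S n).
    pose proof (pow_le x (S n) Hx). nra.
Qed.

Lemma ratio_lim (hh : R -> R) (Hc : forall x, continuity_pt hh x) (N : nat) (a b xs C : R)
  (den : R -> R) (F : R -> R -> R) :
  a < b -> xs <> 0 -> C <> 0 -> hh 0 * C = 1 -> b ^ (N + 1) - a ^ (N + 1) <> 0 ->
  (forall g, 0 < g -> den g = C * g ^ N * INR (N + 1)) ->
  (forall g t, F g t = (t / g) ^ N * hh (t / g)) ->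
  is_lim (fun g => (xs * RInt (F g) a b) / (xs * (b ^ (N + 1) - a ^ (N + 1)) / den g))
    p_infty 1.
Proof.
  intros Hab Hxs HC Hh0 HD Hden HF.
  set (D := b ^ (N + 1) - a ^ (N + 1)) in *.
  assert (HN : INR (N + 1) <> 0) by (apply not_0_INR; lia).
  apply is_lim_ext_loc with
    (fun g => (g ^ N * RInt (fun t => (t / g) ^ N * hh (t / g)) a b) * (C * INR (N + 1) / D)).
  - exists 0. intros g Hg.
    rewrite Hden by exact Hg.
    rewrite (RInt_ext (F g) (fun t => (t / g) ^ N * hh (t / g))) by (intros; apply HF).
    assert (0 < g ^ N) by (apply pow_lt; lra).
    field. repeat split; try assumption; lra.
  - replace (Finite 1) with (Rbar_mult (hh 0 * (D / INR (N + 1))) (C * INR (N + 1) / D)).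
    + apply is_lim_scal_r. apply main_lim; assumption.
    + simpl. f_equal. rewrite <- Hh0. field. split; assumption.
Qed.

Lemma F_MRC_eq (NT NR : nat) (g t : R) : (1 <= NR)%nat ->
  F_MRC NT NR g t = (t / g) ^ (NT * NR) * h NR NT (t / g).
Proof.
  intros HR. unfold F_MRC, h.
  rewrite tail_id by exact HR.
  rewrite Nat.mul_comm, pow_mult, <- Rpow_mult_distr. f_equal. ring.
Qed.

Lemma F_SC_eq (NT NR : nat) (g t : R) :
  F_SC NT NR g t = (t / g) ^ (NT * NR) * h 1 (NT * NR) (t / g).
Proof.
  unfold F_SC, h.
  pose proof (tail_id 1 (t / g) (le_n 1)) as E. simpl in E.
  replace (1 - exp (- (t / g))) with (exp (- (t / g)) * (t / g * 1 * q 1 (t / g))).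
  - rewrite <- Rpow_mult_distr. f_equal. ring.
  - rewrite <- E. field.
Qed.

Theorem mainTheorem3 (NT NR : nat) (Rt beta : R) :
  (1 <= NT)%nat -> (1 <= NR)%nat -> 0 < Rt -> 0 < beta ->
  is_lim (fun gbar => eps_MRC NT NR Rt beta gbar / eps_inf_MRC NT NR Rt beta gbar)
         p_infty 1 /\
  is_lim (fun gbar => eps_SC NT NR Rt beta gbar / eps_inf_SC NT NR Rt beta gbar)
         p_infty 1.
Proof.
  intros HT HR HRt Hb.
  assert (Hxi : 0 < xi Rt).
  { unfold xi. apply Rinv_0_lt_compat, sqrt_lt_R0.
    assert (1 < Rpower 2 (2 * Rt)).
    { rewrite <- (Rpower_O 2) at 1 by lra. apply Rpower_lt; lra. }
    pose proof PI_RGT_0. nra. }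
  assert (Htau : 0 < tau Rt).
  { unfold tau. assert (1 < Rpower 2 Rt).
    { rewrite <- (Rpower_O 2) at 1 by lra. apply Rpower_lt; lra. }
    lra. }
  assert (Hsb : 0 < sqrt beta) by (apply sqrt_lt_R0; lra).
  assert (Hr : 0 < / (2 * xi Rt * sqrt beta)).
  { apply Rinv_0_lt_compat. nra. }
  assert (Hab : phiL Rt beta < phiH Rt beta) by (unfold phiL, phiH; lra).
  assert (HD : forall n, phiH Rt beta ^ (n + 1) - phiL Rt beta ^ (n + 1) <> 0).
  { intros n. replace (n + 1)%nat with (S n) by lia.
    assert (Habs : Rabs (phiL Rt beta) < phiH Rt beta).
    { unfold phiL, phiH. destruct (Rle_dec 0 (tau Rt - / (2 * xi Rt * sqrt beta))).
      - rewrite Rabs_pos_eq by lra. lra.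
      - rewrite Rabs_left by lra. lra. }
    pose proof (pow_lt_S (Rabs (phiL Rt beta)) (phiH Rt beta) n
      (conj (Rabs_pos _) Habs)) as H1.
    rewrite RPow_abs in H1.
    pose proof (Rle_abs (phiL Rt beta ^ S n)). lra. }
  assert (Hxs : xi Rt * sqrt beta <> 0) by nra.
  split.
  - unfold eps_MRC, eps_inf_MRC.
    apply (ratio_lim (h NR NT) (h_cont NR NT) (NT * NR) _ _ _
      (INR (Factorial.fact NR) ^ NT)
      (fun g => INR (Factorial.fact NR) ^ NT * g ^ (NT * NR) * INR (NT * NR + 1))).
    + exact Hab.
    + exact Hxs.
    + apply pow_nonzero, INR_fact_neq_0.
    + rewrite h0, <- Rpow_mult_distr, Rinv_l by apply INR_fact_neq_0. apply pow1.
    + apply HD.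
    + intros; reflexivity.
    + intros g t. apply F_MRC_eq, HR.
  - unfold eps_SC, eps_inf_SC.
    apply (ratio_lim (h 1 (NT * NR)) (h_cont 1 (NT * NR)) (NT * NR) _ _ _ 1
      (fun g => g ^ (NT * NR) * INR (NT * NR + 1))).
    + exact Hab.
    + exact Hxs.
    + lra.
    + rewrite h0. simpl. rewrite Rinv_1, pow1. ring.
    + apply HD.
    + intros; ring.
    + intros g t. apply F_SC_eq.
Qed.
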